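(* Let $q$ be a prime power, $l\ge1$, $t=q^l$, and let $i$ be an integer with $1\le i<q-1$. Let $G_4(x)=x^t+x^{t-1}+1$, $G_5(x)=x^{t+1}+x^t+x$, and $L_4^*=\{\alpha\in GF(t^2):\ \alpha\neq0,\ G_4(\alpha)\ne0\}=\{\alpha_1,\dots,\alpha_n\}$. Let $H_4^{*(i)}$ be the $it\times n$ matrix with entries $\alpha_k^s/G_4(\alpha_k)^i$ ($s=0,\dots,it-1$, $k=1,\dots,n$). Then the matrix obtained by placing the row $\big(1/G_5(\alpha_1)^i,\dots,1/G_5(\alpha_n)^i\big)$ on top of $H_4^{*(i)}$ is a parity-check matrix of $\Gamma_5^{(i)}=\Gamma(L_4^*,G_5^i)$; that is, $\Gamma_5^{(i)}=\{c\in\Gamma_4^{*(i)}:\ \sum_k c_k/G_5(\alpha_k)^i=0\}$ where $\Gamma_4^{*(i)}=\Gamma(L_4^*,G_4^i)$, and the entries $1/G_5(\alpha_k)^i$ all lie in $GF(t)$.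
   Context: For a set $L=\{\alpha_1,\dots,\alpha_n\}$ of distinct elements of $GF(t^2)$ and $P\in GF(t^2)[x]$ with $P(\alpha_k)\neq0$ for all $k$, the $q$-ary Goppa code is $\Gamma(L,P)=\{c\in GF(q)^n:\ \sum_k c_k\alpha_k^s/P(\alpha_k)=0 \text{ for } s=0,\dots,\deg P-1\}$. A matrix $H$ over $GF(t^2)$ is a parity-check matrix of a $q$-ary code $C$ if $C=\{c\in GF(q)^n: cH^T=0\}$. *)

(* Defs.v *)
From mathcomp Require Import all_boot all_order all_algebra.
Set Implicit Arguments. Unset Strict Implicit. Unset Printing Implicit Defensive.
Import GRing.Theory.
Local Open Scope ring_scope.

(* Elements of GF(q) inside a finite field F (of order a power of q) are
   exactly the x with x^q = x. *)
Definition in_subfield (F : finFieldType) (q : nat) (x : F) : bool := x ^+ q == x.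

Definition goppa (F : finFieldType) (q n : nat) (alpha : 'I_n -> F) (P : {poly F})
    (c : 'rV[F]_n) : Prop :=
  (forall k, in_subfield q (c 0 k)) /\
  (forall s : nat, (s < (size P).-1)%N ->
     \sum_(k < n) c 0 k * alpha k ^+ s / P.[alpha k] = 0).

Definition parity_check (F : finFieldType) (q m n : nat) (H : 'M[F]_(m, n))
    (C : 'rV[F]_n -> Prop) : Prop :=
  forall c : 'rV[F]_n, C c <-> ((forall k, in_subfield q (c 0 k)) /\ c *m H^T = 0).

Definition G4 (F : finFieldType) (t : nat) : {poly F} := ('X^t + 'X^(t.-1) + 1)%R.
Definition G5 (F : finFieldType) (t : nat) : {poly F} := ('X^(t.+1) + 'X^t + 'X)%R.

(* Main.v *)
Require Import Defs.
From mathcomp Require Import all_boot all_order all_algebra all_field zify.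
From mathcomp.algebra_tactics Require Import ring.
Import GRing.Theory.
Local Open Scope ring_scope.

Lemma G4E (F : finFieldType) t x : (G4 F t).[x] = x^+t + x^+t.-1 + 1.
Proof. by rewrite /G4 !hornerE. Qed.
Lemma G5E (F : finFieldType) t x : (0 < t)%N -> (G5 F t).[x] = x * (G4 F t).[x].
Proof. move=> t0; rewrite /G5 G4E !hornerE !mulrDr mulr1 -!exprS prednK //. Qed.

Lemma frob_sum (F : fieldType) t n (f : 'I_n -> F) : [pchar F].-nat t ->
  (\sum_(k < n) f k) ^+ t = \sum_(k < n) f k ^+ t.
Proof.
move=> Ht; have t0 : (0 < t)%N by case/andP: Ht.
apply: (big_morph (fun x => x ^+ t)) => [x y|]; first exact: exprDn_pchar.
by rewrite expr0n eqn0Ngt t0.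
Qed.

Lemma key4 (F : finFieldType) t x : [pchar F].-nat t -> #|F| = (t ^ 2)%N -> x != 0 ->
  (G4 F t).[x] ^+ t * x ^+ t.-1 = (G4 F t).[x].
Proof.
move=> Ht HF x0; have t0 : (0 < t)%N by case/andP: Ht.
have xtt : x ^+ (t * t) = x by rewrite mulnn -HF expf_card.
have x1 : x ^+ (t * t).-1 = 1.
  apply: (mulfI x0); rewrite mulr1 -exprS prednK ?muln_gt0 ?t0 //.
rewrite G4E !exprDn_pchar // expr1n -!exprM xtt !mulrDl mul1r -exprS prednK // -exprD.
have -> : (t.-1 * t + t.-1 = (t * t).-1)%N by rewrite -(prednK t0) /=; lia.
by rewrite x1 addrAC.
Qed.

Lemma term4 (F : finFieldType) t (x c : F) s i : [pchar F].-nat t -> #|F| = (t ^ 2)%N -> x != 0 ->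
  (G4 F t).[x] != 0 -> c ^+ t = c -> (i <= t * s)%N ->
  (c * x ^+ (t * s - i) / (G4 F t).[x] ^+ i) ^+ t = c * x ^+ s / ((x * (G4 F t).[x]) ^+ i).
Proof.
move=> Ht HF x0 g0 ct his; have t0 : (0 < t)%N by case/andP: Ht.
have xtt : x ^+ (t * t) = x by rewrite mulnn -HF expf_card.
have kg := @key4 F t x Ht HF x0.
set g := (G4 F t).[x] in kg g0 *.
rewrite -[in RHS]kg !exprMn exprVn ct -!exprM.
set u := (t * s - i)%N.
have E1 : x ^+ s = x ^+ (u * t) * x ^+ i * (x ^+ t.-1) ^+ i.
  rewrite -!exprM -!exprD -[in LHS]xtt -exprM; congr (_ ^+ _).
  rewrite /u -(prednK t0) /=; nia.
have -> : (i * t = t * i)%N by rewrite mulnC.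
rewrite exprM E1.
have G0 : g ^+ t != 0 by rewrite expf_neq0.
have Y0 : x ^+ t.-1 != 0 by rewrite expf_neq0.
rewrite -!exprM.
have A0 : x ^+ i != 0 by rewrite expf_neq0.
have B0 : x ^+ (t.-1 * i) != 0 by rewrite expf_neq0.
have C0 : g ^+ (t * i) != 0 by rewrite expf_neq0.
set A := x ^+ i in A0 *. set B := x ^+ (t.-1 * i) in B0 *.
set C := g ^+ (t * i) in C0 *. set X := x ^+ (u * t).
clearbody A B C X.
by field; rewrite A0 B0 C0.
Qed.

Lemma sizeG5 (F : finFieldType) t : (0 < t)%N -> size (G5 F t) = t.+2.
Proof.
move=> t0; rewrite /G5 -addrA size_addl size_polyXn //.
apply: leq_ltn_trans (size_add _ _) _; rewrite size_polyXn size_polyX gtn_max.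
by rewrite ltnSn /= !ltnS.
Qed.

Lemma sizeG4 (F : finFieldType) t : (0 < t)%N -> size (G4 F t) = t.+1.
Proof.
move=> t0; rewrite /G4 -addrA size_addl size_polyXn //.
apply: leq_ltn_trans (size_add _ _) _; rewrite size_polyXn size_poly1 gtn_max.
by rewrite prednK // leqnn ltnS.
Qed.

Lemma sub_pow (F : finFieldType) (c : F) q l : c ^+ q = c -> c ^+ (q ^ l) = c.
Proof.
move=> cq; elim: l => [|l IH]; first by rewrite expr1.
by rewrite expnS exprM cq IH.
Qed.

Lemma t5 (F : finFieldType) (x g c : F) s i : x != 0 -> g != 0 ->
  c * x ^+ (s + i) / (x * g) ^+ i = c * x ^+ s / g ^+ i.
Proof.
move=> x0 g0; rewrite exprD exprMn.
have A0 : x ^+ i != 0 by rewrite expf_neq0.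
have B0 : g ^+ i != 0 by rewrite expf_neq0.
set A := x ^+ i in A0 *. set B := g ^+ i in B0 *. clearbody A B.
by field; rewrite A0 B0.
Qed.

Theorem lemma6 (F : finFieldType) (p m l t i : nat) (q := (p ^ m)%N)
    (Hp : prime p) (Hm : (0 < m)%N) (Hl : (0 < l)%N) (Ht : t = (q ^ l)%N)
    (HF : #|F| = (t ^ 2)%N) (Hi1 : (1 <= i)%N) (Hi2 : (i < q - 1)%N)
    (n : nat) (alpha : 'I_n -> F) (Hinj : injective alpha)
    (HL : forall x : F, (x != 0 /\ (G4 F t).[x] != 0) <-> exists k, alpha k = x) :
  let H4 := \matrix_(s < i * t, k < n) (alpha k ^+ s / ((G4 F t).[alpha k]) ^+ i) in
  let r := \row_(k < n) ((G5 F t).[alpha k] ^+ i)^-1 in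
  parity_check q (col_mx r H4) (goppa q alpha (G5 F t ^+ i)) /\
  (forall c : 'rV[F]_n, goppa q alpha (G5 F t ^+ i) c <->
     (goppa q alpha (G4 F t ^+ i) c /\
      \sum_(k < n) c 0 k / (G5 F t).[alpha k] ^+ i = 0)) /\
  (forall k : 'I_n, in_subfield t (((G5 F t).[alpha k] ^+ i)^-1)).
Proof.
move=> H4 r.
have q0 : (0 < q)%N by rewrite expn_gt0 prime_gt0.
have qt : (q <= t)%N.
  rewrite Ht; case: (l) Hl => // l' _; by rewrite expnS leq_pmulr // expn_gt0 q0.
have t0 : (0 < t)%N by apply: leq_trans qt; lia.
have it : (i <= t)%N by lia.
have pc : p \in [pchar F].
  apply: (@card_finPcharP F p (m * l * 2)) ; last by []. 
by rewrite HF Ht /q -!expnM mulnA.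
have Hpt : [pchar F].-nat t.
  rewrite (eq_pnat _ (pcharf_eq pc)) Ht /q -expnM pnatX pnat_id //.
have La k : alpha k != 0 /\ (G4 F t).[alpha k] != 0 by apply/HL; exists k.
have ct (c : F) : in_subfield q c -> c ^+ t = c.
  by move/eqP=> cq; rewrite Ht sub_pow.
have s5 : (size (G5 F t ^+ i)).-1 = (t.+1 * i)%N by rewrite size_exp sizeG5.
have s4 : (size (G4 F t ^+ i)).-1 = (t * i)%N by rewrite size_exp sizeG4.
have P2 : forall c : 'rV[F]_n, goppa q alpha (G5 F t ^+ i) c <->
     (goppa q alpha (G4 F t ^+ i) c /\
      \sum_(k < n) c 0 k / (G5 F t).[alpha k] ^+ i = 0).
  move=> c; rewrite /goppa s5 s4; split.
  - move=> [Hc H5]; split; first split => // s hs.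
    + have h' : (s + i < t.+1 * i)%N by rewrite mulSn; lia.
      rewrite -[RHS](H5 (s + i)%N h').
      apply: eq_bigr => k _; have [a0 g0] := La k.
      by rewrite !horner_exp G5E // t5.
    + have h' : (0 < t.+1 * i)%N by rewrite muln_gt0 Hi1.
      rewrite -[RHS](H5 0%N h').
      by apply: eq_bigr => k _; rewrite expr0 mulr1 horner_exp.
  - move=> [[Hc H4'] H0]; split => // s hs.
    have [si|si] := leqP i s.
    + have h' : (s - i < t * i)%N by move: hs; rewrite mulSn; lia.
      rewrite -[RHS](H4' (s - i)%N h').
      apply: eq_bigr => k _; have [a0 g0] := La k.
      by rewrite !horner_exp G5E // -{1}(subnK si) t5.
    + case: s hs si => [|s] hs si.
        by rewrite -[RHS]H0; apply: eq_bigr => k _; rewrite expr0 mulr1 horner_exp.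
      have hu : (t * s.+1 - i < t * i)%N by nia.
      have := congr1 (fun z => z ^+ t) (H4' _ hu).
      rewrite frob_sum // expr0n eqn0Ngt t0 /= => E; rewrite -[RHS]E.
      apply: eq_bigr => k _; have [a0 g0] := La k.
      rewrite !horner_exp G5E // term4 //; last by nia.
      exact: ct.
split; last split => //.
- move=> c; rewrite P2 /goppa s4; split.
  + move=> [[Hc H4'] H0]; split => //.
    rewrite tr_col_mx mul_mx_row; apply/eqP; rewrite row_mx_eq0; apply/andP; split.
      apply/eqP/matrixP => a b; rewrite !mxE (ord1 a) (ord1 b) -[RHS]H0.
      by apply: eq_bigr => k _; rewrite !mxE.
    apply/eqP/matrixP => a b; rewrite !mxE (ord1 a).
    have hb : (b < t * i)%N by have := ltn_ord b; lia.
    rewrite -[RHS](H4' b hb).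
    by apply: eq_bigr => k _; rewrite !mxE mulrA horner_exp.
  + move=> [Hc]; rewrite tr_col_mx mul_mx_row => /eqP; rewrite row_mx_eq0.
    case/andP => /eqP E1 /eqP E2; split; first split => // s hs.
      have hs' : (s < i * t)%N by rewrite mulnC.
      have := congr1 (fun M : 'M[F]_(1, i * t) => M 0 (Ordinal hs')) E2; rewrite !mxE => E; rewrite -[RHS]E.
      by apply: eq_bigr => k _; rewrite !mxE mulrA horner_exp.
    have := congr1 (fun M : 'M[F]_(1, 1) => M 0 0) E1; rewrite !mxE => E; rewrite -[RHS]E.
    by apply: eq_bigr => k _; rewrite !mxE.
- move=> k; rewrite /in_subfield -exprVn -exprM mulnC exprM exprVn.
  have xtt : alpha k ^+ (t * t) = alpha k by rewrite mulnn -HF expf_card.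
  suff e : (G5 F t).[alpha k] ^+ t = (G5 F t).[alpha k] by rewrite exprVn e exprVn.
  rewrite /G5 !hornerE !exprDn_pchar // -!exprM xtt mulSn exprD xtt -exprSr.
  by rewrite addrAC.
Qed.
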